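(* Let $1<a_1<a_2$ be coprime integers. For every $r\in\left(0,\frac{a_2}{a_1+a_2}\right)$ there exists $T$ such that if $t\ge T$, then $\mu_t'(r)<-\frac{1}{a_2}$.
   Context: For $t\in[1,\infty)$ and $(u,v)\in\mathbb{R}^2$, $\|(u,v)\|_t=(|u|^t+|v|^t)^{1/t}$. Define $\mu_t(r)=\left\|\left(\frac{1-r}{a_1},\frac{r}{a_2}\right)\right\|_t$ for $r\in[0,1]$; $\mu_t'$ denotes the derivative with respect to $r$. *)

(* Defs.v *)
From Stdlib Require Import Reals.
From Coquelicot Require Import Coquelicot.
Open Scope R_scope.

Definition abs_rpow (x t : R) : R :=
  if Req_EM_T x 0 then 0 else Rpower (Rabs x) t.

Definition nonneg_root (s t : R) : R :=
  if Req_EM_T s 0 then 0 else Rpower s (/ t).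

Definition tnorm (t u v : R) : R :=
  nonneg_root (abs_rpow u t + abs_rpow v t) t.

Definition mu (a1 a2 : nat) (t r : R) : R :=
  tnorm t ((1 - r) / INR a1) (r / INR a2).

(* Main.v *)
Require Import Defs.
From Stdlib Require Import Reals Arith Lra.
From Coquelicot Require Import Coquelicot.
Open Scope R_scope.

Theorem corollary2 (a1 a2 : nat) :
  (1 < a1)%nat -> (a1 < a2)%nat -> Nat.gcd a1 a2 = 1%nat ->
  forall r : R, 0 < r -> r < INR a2 / (INR a1 + INR a2) ->
  exists T : R, forall t : R, 1 <= t -> T <= t ->
    exists d : R, is_derive (mu a1 a2 t) r d /\ d < - / INR a2.
Proof.
  intros H1 H2 _ r Hr0 Hr1.
  assert (Ha1 : 1 < INR a1) by (apply (lt_INR 1); exact H1).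
  assert (Ha2 : INR a1 + 1 <= INR a2).
  { rewrite <- S_INR. apply le_INR. exact H2. }
  assert (Hr2 : r * (INR a1 + INR a2) < INR a2).
  { apply (Rmult_lt_compat_r (INR a1 + INR a2)) in Hr1; [|lra].
    unfold Rdiv in Hr1. rewrite Rmult_assoc, Rinv_l in Hr1; lra. }
  assert (Hrl1 : r < 1) by nra.
  set (u := (1 - r) / INR a1).
  set (v := r / INR a2).
  assert (Hu : 0 < u) by (unfold u; apply Rdiv_lt_0_compat; lra).
  assert (Hv : 0 < v) by (unfold v; apply Rdiv_lt_0_compat; lra).
  assert (Hvu : v < u).
  { unfold u, v. apply (Rmult_lt_reg_r (INR a1 * INR a2)); [nra|].
    field_simplify; try lra. }
  set (L := ln u). set (M := ln v).
  assert (HML : M - L < 0).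
  { unfold M, L. pose proof (ln_increasing v u Hv Hvu). lra. }
  set (c := / (4 * INR a1)).
  assert (Hc : 0 < c) by (unfold c; apply Rinv_0_lt_compat; lra).
  exists (1 + ln c / (M - L)).
  intros t Ht1 HT.
  set (A := exp (t * L)). set (B := exp (t * M)). set (S := A + B).
  set (P := exp (/ t * ln S)).
  exists (/ t * ((t * (-(1) * / INR a1 * / u) * A + t * (1 * / INR a2 * / v) * B) * / S) * P).
  split.
  - apply (is_derive_ext_loc (fun x => exp (/ t * ln (exp (t * ln ((1 - x) / INR a1)) + exp (t * ln (x / INR a2)))))).
    + assert (He : 0 < Rmin r (1 - r)) by (apply Rmin_glb_lt; lra).
      exists (mkposreal _ He). intros x Hx.
      change (Rabs (x - r) < Rmin r (1 - r)) in Hx.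
      apply Rabs_def2 in Hx. destruct Hx as [Hx1 Hx2].
      pose proof (Rmin_l r (1 - r)). pose proof (Rmin_r r (1 - r)).
      assert (Hux : 0 < (1 - x) / INR a1) by (apply Rdiv_lt_0_compat; lra).
      assert (Hvx : 0 < x / INR a2) by (apply Rdiv_lt_0_compat; lra).
      unfold mu, tnorm, abs_rpow, nonneg_root.
      destruct (Req_EM_T ((1 - x) / INR a1) 0) as [E|_]; [lra|].
      destruct (Req_EM_T (x / INR a2) 0) as [E|_]; [lra|].
      rewrite !Rabs_pos_eq by lra.
      destruct (Req_EM_T _ 0) as [E|_].
      { exfalso. unfold Rpower in E. pose proof (exp_pos (t * ln ((1 - x) / INR a1))).
        pose proof (exp_pos (t * ln (x / INR a2))). lra. }
      reflexivity.
    + auto_derive.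
      * split; [exact Hu|split; [exact Hv|split; [apply Rplus_lt_0_compat; apply exp_pos|exact I]]].
      * reflexivity.
  - assert (Ht0 : 0 < t) by lra.
    assert (HA : 0 < A) by apply exp_pos.
    assert (HB : 0 < B) by apply exp_pos.
    assert (HS : 0 < S) by (unfold S; lra).
    assert (HuL : u = exp L) by (unfold L; rewrite exp_ln; auto).
    assert (HvM : v = exp M) by (unfold M; rewrite exp_ln; auto).
    set (x := exp (t * (M - L))). set (y := exp ((t - 1) * (M - L))).
    assert (Hx : B = A * x).
    { unfold B, A, x. rewrite <- exp_plus. f_equal. ring. }
    assert (Hy : B * u = A * y * v).
    { unfold B, A, y. rewrite HuL, HvM, <- !exp_plus. f_equal. ring. }
    assert (Hyc : y <= c).
    { unfold y. rewrite <- (exp_ln c Hc).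
      assert (Hq : ln c / (M - L) <= t - 1) by lra.
      apply (Rmult_le_compat_neg_l (M - L)) in Hq; [|lra].
      replace ((M - L) * (ln c / (M - L))) with (ln c) in Hq by (field; lra).
      destruct (Rle_lt_or_eq_dec _ _ Hq) as [H'|H'].
      - left. apply exp_increasing. lra.
      - right. rewrite <- H'. f_equal. ring. }
    assert (Hxy : x <= y).
    { unfold x, y. left. apply exp_increasing. nra. }
    assert (HPu : u <= P).
    { unfold P. rewrite HuL. left. apply exp_increasing.
      assert (ln A < ln S) by (apply ln_increasing; unfold S; lra).
      unfold A in H. rewrite ln_exp in H.
      apply (Rmult_lt_reg_l t); [lra|]. field_simplify; lra. }
    assert (Hcy : INR a1 * y <= / 4).
    { replace (/4) with (INR a1 * c) by (unfold c; field; lra).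
      apply Rmult_le_compat_l; lra. }
    assert (Hy0 : 0 < y) by apply exp_pos.
    assert (Hx0 : 0 < x) by apply exp_pos.
    assert (HB' : B = A * y * v / u) by (rewrite <- Hy; field; lra).
    assert (HS' : S = A * (1 + x)) by (unfold S; rewrite Hx; ring).
    set (N := P * A * (INR a2 - INR a1 * y)).
    set (D := INR a1 * INR a2 * S * u).
    assert (HD : 0 < D) by (unfold D; apply Rmult_lt_0_compat; [apply Rmult_lt_0_compat; [apply Rmult_lt_0_compat|]|]; lra).
    replace (/ t * ((t * (-(1) * / INR a1 * / u) * A + t * (1 * / INR a2 * / v) * B) * / S) * P)
      with (- (N / D)).
    2: { unfold N, D. rewrite HB'. field. repeat split; lra. }
    assert (HN : INR a1 * S * u < N).
    { unfold N. rewrite HS'.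
      apply Rlt_le_trans with (u * A * (INR a2 - INR a1 * y)).
      - assert (INR a1 * x <= INR a1 * y) by (apply Rmult_le_compat_l; lra).
        assert (INR a1 * (1 + x) < INR a2 - INR a1 * y) by lra.
        assert (0 < u * A) by (apply Rmult_lt_0_compat; lra).
        replace (INR a1 * (A * (1 + x)) * u) with ((u * A) * (INR a1 * (1 + x))) by ring.
        replace (u * A * (INR a2 - INR a1 * y)) with ((u * A) * (INR a2 - INR a1 * y)) by ring.
        apply Rmult_lt_compat_l; lra.
      - apply Rmult_le_compat_r; [lra|]. apply Rmult_le_compat_r; lra. }
    apply Ropp_lt_contravar.
    replace (/ INR a2) with ((INR a1 * S * u) / D) by (unfold D; field; repeat split; lra).
    apply Rmult_lt_compat_r; [apply Rinv_0_lt_compat; lra | exact HN].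
Qed.
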